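(* Let $f_\bullet\colon X\to Z$ be any set mapping between finite metric spaces, let $V=\mathrm{PH}_0(X)$, $U=\mathrm{PH}_0(Z)$, and let $f_0\colon V_0\to U_0$ be the induced linear map. Then for all $a\in S^V$ and all $b\in S^U$, $\mathcal{M}^0_f(a,b)=\dim H_1(G(f_\bullet)_{(a,b)})$, i.e. $\mathcal{M}^0_f(a,b)$ equals the number of independent cycles (first Betti number) of the graph $G(f_\bullet)_{(a,b)}$.
   Context: All vector spaces are over $\mathbb{Z}_2$. For a finite metric space $(X,d^X)$ and $r\ge 0$, $\mathrm{VR}_r(X)$ is the graph with vertex set $X$ and edges $[x,y]$ with $d^X(x,y)\le r$; write $\mathrm{VR}^+_s(X)=\mathrm{VR}_s(X)$ and $\mathrm{VR}^-_s(X)=\bigcup_{r<s}\mathrm{VR}_r(X)$ (edges with $d^X(x,y)<s$). $\mathrm{PH}_0(X)$ is the persistence module $r\mapsto H_0(\mathrm{VR}_r(X))$ (vector space freely generated by connected components) with structure maps $\rho_{rs}$ induced by inclusion; in particular $\mathrm{PH}_0(X)_0$ has basis $X$. Since $X$ is finite, $\mathrm{PH}_0(X)\cong \bigoplus_{b>0}\kappa_{[0,b)}^{m^V(b)}\oplus\kappa_{[0,\infty)}$; the barcode is the multiset $(S^V,m^V)$ with $S^V\subset(0,\infty)$ the set of finite $b$ with $m^V(b)>0$ (the infinite bar is excluded). For a persistence module $U$ and $b>0$ let $\ker^+_b(U)=\ker(\rho^U_{0b})$ and $\ker^-_b(U)=\bigcup_{0\le r<b}\ker(\rho^U_{0r})$,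 subspaces of $U_0$. For a set mapping $f_\bullet\colon X\to Z$, $f_0\colon V_0\to U_0$ is the linear map sending the basis element $x$ to $f_\bullet(x)$, and for $a,b>0$ $$\mathcal{M}^0_f(a,b)=\dim\frac{f_0(\ker^+_a V)\cap \ker^+_b U}{f_0(\ker^-_a V)\cap\ker^+_b U+f_0(\ker^+_a V)\cap \ker^-_b U}.$$ For $a,b>0$, $f_\bullet(\mathrm{VR}^\pm_a(X))$ denotes the graph with vertex set $f_\bullet(X)$ and edges $[f_\bullet(x),f_\bullet(y)]$ for edges $[x,y]$ of $\mathrm{VR}^\pm_a(X)$. Let $\mathcal{A}=f_\bullet(\mathrm{VR}^+_a(X))\cup\mathrm{VR}^-_b(Z)$, $\mathcal{B}=f_\bullet(\mathrm{VR}^-_a(X))\cup \mathrm{VR}^+_b(Z)$, $\mathcal{C}=f_\bullet(\mathrm{VR}^-_a(X))\cup\mathrm{VR}^-_b(Z)$, all graphs on vertex set $Z$, so $\mathcal{C}\subseteq\mathcal{A},\mathcal{B}$. Let $\pi_0$ denote the set of connected components, and $\iota\colon\pi_0(\mathcal{C})\to\pi_0(\mathcal{A})$, $\mu\colon\pi_0(\mathcal{C})\to\pi_0(\mathcal{B})$ the maps induced by inclusion. $G(f_\bullet)_{(a,b)}$ is the graph with vertex set the disjoint union $\pi_0(\mathcal{A})\sqcup\pi_0(\mathcal{C})\sqcup\pi_0(\mathcal{B})$ and edges $(c,\iota(c))$ and $(c,\mu(c))$ for all $c\in\pi_0(\mathcal{C})$. *)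

(* Defs.v *)
From mathcomp Require Import all_boot all_order all_algebra.
From mathcomp Require Import boolp reals.
Set Implicit Arguments. Unset Strict Implicit. Unset Printing Implicit Defensive.
Import Order.TTheory GRing.Theory Num.Theory.
Local Open Scope ring_scope.

Definition F2 := ('F_2)^o.

(* Z_2-chains on a finite set T: the vector space freely generated by T. *)
Definition chains (T : finType) := {ffun T -> F2}.

Definition is_metric (R : realType) (T : finType) (d : T -> T -> R) : Prop :=
  [/\ forall x y, 0 <= d x y,
      forall x y, d x y = 0 <-> x = y,
      forall x y, d x y = d y x &
      forall x y z, d x z <= d x y + d y z].

(** Undirected graphs on a finite vertex set, given by an edge relation;
    we symmetrize so that connectivity is the undirected one. *)
Definition usym (T : finType) (e : rel T) : rel T := fun x y => e x y || e y x.

Lemma usym_sym (T : finType) (e : rel T) : symmetric (usym e).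
Proof. by move=> x y; rewrite /usym orbC. Qed.

(* pi_0 of the graph: connected components, represented by their canonical
   root (fingraph's [root]). *)
Definition comp (T : finType) (e : rel T) := {x : T | fingraph.root (usym e) x == x}.

Lemma root_is_root (T : finType) (e : rel T) (x : T) :
  fingraph.root (usym e) (fingraph.root (usym e) x) == fingraph.root (usym e) x.
Proof. by rewrite root_root //; apply: sym_connect_sym; apply: usym_sym. Qed.

Definition comp_of (T : finType) (e : rel T) (x : T) : comp e :=
  exist _ (fingraph.root (usym e) x) (root_is_root e x).

(* H_0 of a graph = free vector space on components; the map induced by the
   inclusion of the discrete graph (basis x |-> its component). *)
Definition H0map (T : finType) (e : rel T) (v : chains T) : {ffun comp e -> F2} :=
  [ffun c => \sum_(x | comp_of e x == c) v x].

Lemma H0map_linear (T : finType) (e : rel T) : linear (@H0map T e).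
Proof.
move=> k u v; apply/ffunP => c; rewrite !ffunE scaler_sumr -big_split /=.
by apply: eq_bigr => x _; rewrite !ffunE.
Qed.

Definition VR (R : realType) (T : finType) (d : T -> T -> R) (r : R) : rel T :=
  fun x y => d x y <= r.

Definition rho0 (R : realType) (T : finType) (d : T -> T -> R) (r : R) :
  'Hom(chains T, {ffun comp (VR d r) -> F2}) := linfun (@H0map T (VR d r)).

Definition kerP (R : realType) (T : finType) (d : T -> T -> R) (b : R) :
  {vspace chains T} := lker (rho0 d b).

(* ker^-_b = union over 0 <= r < b of ker rho_{0r} (a nested union of
   subspaces; we take its span, which is the union itself). *)
Definition kerM (R : realType) (T : finType) (d : T -> T -> R) (b : R) :
  {vspace chains T} :=
  <<[seq v <- enum (chains T) |
      `[< exists r : R, (0 <= r)%R /\ (r < b)%R /\ v \in lker (rho0 d r) >]]>>%VS.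

(* The barcode support S^V of PH_0(X): the finite death times b > 0 with
   positive multiplicity m^V(b) = dim (ker^+_b / ker^-_b). *)
Definition barcode (R : realType) (T : finType) (d : T -> T -> R) (b : R) : Prop :=
  0 < b /\ (\dim (kerM d b) < \dim (kerP d b))%N.

Definition pushf (X Z : finType) (f : X -> Z) (v : chains X) : chains Z :=
  [ffun z => \sum_(x | f x == z) v x].

Lemma pushf_linear (X Z : finType) (f : X -> Z) : linear (pushf f).
Proof.
move=> k u v; apply/ffunP => z; rewrite !ffunE scaler_sumr -big_split /=.
by apply: eq_bigr => x _; rewrite !ffunE.
Qed.

Definition f0 (X Z : finType) (f : X -> Z) : 'Hom(chains X, chains Z) :=
  linfun (pushf f).

(* dimension of a quotient of subspaces (used with B <= A) *)
Definition qdim (K : fieldType) (vT : vectType K) (A B : {vspace vT}) : nat :=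
  (\dim A - \dim B)%N.

Definition Mf (R : realType) (X Z : finType) (dX : X -> X -> R) (dZ : Z -> Z -> R)
  (f : X -> Z) (a b : R) : nat :=
  qdim ((f0 f @: kerP dX a) :&: kerP dZ b)%VS
       (((f0 f @: kerM dX a) :&: kerP dZ b) + ((f0 f @: kerP dX a) :&: kerM dZ b))%VS.

(* f(VR^+_a(X)) (strict = false) or f(VR^-_a(X)) (strict = true) *)
Definition fVR (R : realType) (X Z : finType) (dX : X -> X -> R) (f : X -> Z)
  (strict : bool) (a : R) : rel Z :=
  fun z w => [exists x, exists y,
     [&& f x == z, f y == w & (if strict then dX x y < a else dX x y <= a)]].

Definition VRs (R : realType) (T : finType) (d : T -> T -> R)
  (strict : bool) (b : R) : rel T :=
  fun x y => if strict then d x y < b else d x y <= b.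

Definition grA (R : realType) (X Z : finType) (dX : X -> X -> R) (dZ : Z -> Z -> R)
  (f : X -> Z) (a b : R) : rel Z :=
  fun z w => fVR dX f false a z w || VRs dZ true b z w.
Definition grB (R : realType) (X Z : finType) (dX : X -> X -> R) (dZ : Z -> Z -> R)
  (f : X -> Z) (a b : R) : rel Z :=
  fun z w => fVR dX f true a z w || VRs dZ false b z w.
Definition grC (R : realType) (X Z : finType) (dX : X -> X -> R) (dZ : Z -> Z -> R)
  (f : X -> Z) (a b : R) : rel Z :=
  fun z w => fVR dX f true a z w || VRs dZ true b z w.

(** The graph G(f)_(a,b): vertices pi0(A) + pi0(C) + pi0(B), and for every
    c in pi0(C) an edge (c, false) between c and iota(c), and an edge
    (c, true) between c and mu(c). *)
Section GraphG.
Variables (R : realType) (X Z : finType) (dX : X -> X -> R) (dZ : Z -> Z -> R)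
  (f : X -> Z) (a b : R).

Definition GV : finType := (comp (grA dX dZ f a b) + comp (grC dX dZ f a b)
                            + comp (grB dX dZ f a b))%type.
Definition GE : finType := (comp (grC dX dZ f a b) * bool)%type.

Definition iota_ (c : comp (grC dX dZ f a b)) : comp (grA dX dZ f a b) :=
  comp_of (grA dX dZ f a b) (val c).
Definition mu_ (c : comp (grC dX dZ f a b)) : comp (grB dX dZ f a b) :=
  comp_of (grB dX dZ f a b) (val c).

Definition Gsrc (ed : GE) : GV := inl (inr ed.1).
Definition Gtgt (ed : GE) : GV :=
  if ed.2 then inr (mu_ ed.1) else inl (inl (iota_ ed.1)).

Definition Gbd (v : chains GE) : chains GV :=
  [ffun w => \sum_(ed | Gsrc ed == w) v ed + \sum_(ed | Gtgt ed == w) v ed].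

Lemma Gbd_linear : linear Gbd.
Proof.
move=> k u v; apply/ffunP => w; rewrite !ffunE scalerDr !scaler_sumr addrACA -!big_split /=.
by congr (_ + _); apply: eq_bigr => x _; rewrite !ffunE.
Qed.

(* H_1(G) = ker of the boundary (G has no 2-cells) *)
Definition H1G : {vspace chains GE} := lker (linfun Gbd).

End GraphG.

(* Main.v *)
Require Import Defs.
From HB Require Import structures.
From mathcomp Require Import all_boot all_order all_algebra.
From mathcomp Require Import boolp reals.
From mathcomp Require Import zify.
Set Implicit Arguments. Unset Strict Implicit. Unset Printing Implicit Defensive.
Import Order.TTheory GRing.Theory Num.Theory.
Local Open Scope ring_scope.



HB.instance Definition _ (X Z : finType) (f : X -> Z) :=
  GRing.isLinear.Build F2 (chains X) (chains Z) _ (pushf f) (pushf_linear f).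
HB.instance Definition _ (T : finType) (e : rel T) :=
  GRing.isLinear.Build F2 (chains T) {ffun Defs.comp e -> F2} _ (@H0map T e) (@H0map_linear T e).

Lemma F2_2 (x : F2) : x + x = 0.
Proof. apply: addrr_pchar2. exact: (pchar_Fp (isT : prime 2)). Qed.

Lemma F2_eq (x y : F2) : x + y = 0 -> x = y.
Proof. by move=> h; rewrite -[y]add0r -h -addrA F2_2 addr0. Qed.





Definition dlt (T : finType) (z : T) : chains T := [ffun y => (y == z)%:R].
Definition Kr (T : finType) (e : rel T) : {vspace chains T} := lker (linfun (H0map e)).

Lemma sum_eq1 (T : finType) (P : pred T) (z : T) :
  \sum_(x | P x) ((x == z)%:R : F2) = (P z)%:R.
Proof.
rewrite big_mkcond (bigD1 z) //= eqxx big1 ?addr0; first by case: (P z).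
by move=> x /negbTE ->; case: (P x).
Qed.

Lemma pushf_dlt (X Z : finType) (f : X -> Z) x : pushf f (dlt x) = dlt (f x).
Proof.
apply/ffunP => z; rewrite !ffunE.
under eq_bigr do rewrite ffunE.
by rewrite sum_eq1 eq_sym.
Qed.

Lemma H0mapE (T : finType) (e : rel T) v : H0map e v = pushf (comp_of e) v.
Proof. by []. Qed.

Lemma pushf_comp (X Y Z : finType) (g : X -> Y) (h : Y -> Z) v :
  pushf h (pushf g v) = pushf (h \o g) v.
Proof.
apply/ffunP => z; rewrite !ffunE.
under eq_bigr do rewrite ffunE.
symmetry; rewrite (partition_big g (fun y => h y == z)) //=.
apply: eq_bigr => y /eqP hy; apply: eq_bigl => x.
by rewrite andb_idl // => /eqP ->; rewrite hy.
Qed.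

Lemma pushf_ext (X Z : finType) (g h : X -> Z) v : g =1 h -> pushf g v = pushf h v.
Proof. by move=> gh; apply/ffunP => z; rewrite !ffunE; apply: eq_bigl => x; rewrite gh. Qed.

Lemma comp_of_val (T : finType) (e : rel T) (c : Defs.comp e) : comp_of e (val c) = c.
Proof. by apply: val_inj => /=; apply/eqP; exact: (valP c). Qed.

Lemma dlt_sum (T : finType) (v : chains T) : v = \sum_x v x *: dlt x.
Proof.
apply/ffunP => y; rewrite sum_ffunE.
under eq_bigr do rewrite !ffunE.
have sE : forall a b : F2, a *: b = a * b by [].
under eq_bigr do rewrite sE.
rewrite (bigD1 y) //= eqxx mulr1 big1 ?addr0 // => x /negbTE.
by rewrite eq_sym => ->; rewrite mulr0.
Qed.

Section KrT.
Variables (T : finType) (e : rel T).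
Let se := sym_connect_sym (usym_sym e).

Lemma comp_of_eq z w : connect (usym e) z w -> comp_of e z = comp_of e w.
Proof. by move=> c; apply: val_inj => /=; apply/(fingraph.rootP se). Qed.

Lemma Kr_memc z w : connect (usym e) z w -> dlt z - dlt w \in Kr e.
Proof.
move=> c; rewrite memv_ker lfunE /= linearB /= !H0mapE !pushf_dlt.
by rewrite (comp_of_eq c) subrr.
Qed.

Lemma Kr_mem z w : e z w -> dlt z - dlt w \in Kr e.
Proof. by move=> h; apply: Kr_memc; apply: connect1; rewrite /usym h. Qed.

Lemma Kr_sub (S : {vspace chains T}) :
  (forall z w, e z w -> dlt z - dlt w \in S) -> (Kr e <= S)%VS.
Proof.
move=> hS.
have hc : forall z w, connect (usym e) z w -> dlt z - dlt w \in S.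
  move=> z w /connectP [p pth ->]; elim: p z pth => [|y p IH] z /=.
    by rewrite subrr mem0v.
  case/andP => hzy /IH hy.
  have -> : dlt z - dlt (last y p) = (dlt z - dlt y) + (dlt y - dlt (last y p)).
    by rewrite addrA subrK.
  apply: memvD => //; case/orP: hzy => h; first exact: hS.
  by rewrite -opprB memvN; apply: hS.
apply/subvP => v; rewrite memv_ker lfunE /= => /eqP hv.
have P0 : pushf (fingraph.root (usym e)) v = 0.
  rewrite (@pushf_ext _ _ _ (val \o comp_of e)) // -pushf_comp -H0mapE hv.
  exact: linear0.
have Ev : \sum_x v x *: (dlt x - dlt (fingraph.root (usym e) x))
          + pushf (fingraph.root (usym e)) v = v.
  rewrite [X in pushf _ X]dlt_sum linear_sum -big_split [RHS]dlt_sum.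
  apply: eq_bigr => x _ /=.
  by rewrite linearZ /= pushf_dlt -scalerDr subrK.
rewrite -Ev P0 addr0; apply: memv_suml => x _; apply: memvZ; apply: hc.
exact: connect_root.
Qed.

End KrT.

Lemma Kr_mono (T : finType) (e e' : rel T) :
  (forall z w, e z w -> e' z w) -> (Kr e <= Kr e')%VS.
Proof. by move=> h; apply: Kr_sub => z w /h; apply: Kr_mem. Qed.

Lemma Kr_union (T : finType) (e e' : rel T) :
  Kr (fun z w => e z w || e' z w) = (Kr e + Kr e')%VS.
Proof.
apply/eqP; rewrite eqEsubv; apply/andP; split.
  apply: Kr_sub => z w /orP [] h.
    by apply: (subvP (addvSl _ _)); apply: Kr_mem.
  by apply: (subvP (addvSr _ _)); apply: Kr_mem.
by rewrite subv_add !Kr_mono // => z w ->; rewrite ?orbT.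
Qed.

Lemma Kr_img (X Z : finType) (f : X -> Z) (e : rel X) :
  (linfun (pushf f) @: Kr e)%VS =
  Kr (fun z w => [exists x, exists y, [&& f x == z, f y == w & e x y]]).
Proof.
apply/eqP; rewrite eqEsubv; apply/andP; split.
  apply/subvP => u /memv_imgP [v hv ->]; rewrite memv_preim.
  move: v hv; apply/subvP; apply: Kr_sub => x y exy.
  rewrite -memv_preim lfunE /= linearB /= !pushf_dlt; apply: Kr_mem.
  by apply/existsP; exists x; apply/existsP; exists y; rewrite !eqxx exy.
apply: Kr_sub => z w /existsP [x /existsP [y /and3P [/eqP <- /eqP <- exy]]].
rewrite -!pushf_dlt -linearB /= -(lfunE (pushf f)); apply: memv_img.
exact: Kr_mem.
Qed.



Lemma kerP_eq (R : realType) (T : finType) (d : T -> T -> R) b :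
  kerP d b = Kr (VRs d false b).
Proof. by []. Qed.

Lemma kerM_eq (R : realType) (T : finType) (d : T -> T -> R) b :
  (forall x y, 0 <= d x y) -> kerM d b = Kr (VRs d true b).
Proof.
move=> d0; apply/eqP; rewrite eqEsubv; apply/andP; split.
  apply/span_subvP => v; rewrite mem_filter => /andP [/asboolP [r [r0 [rb hv]]] _].
  have : (Kr (VR d r) <= Kr (VRs d true b))%VS.
    by apply: Kr_mono => z w /= h; exact: le_lt_trans h rb.
  by move/subvP; apply.
apply: Kr_sub => z w /= h; apply: memv_span; rewrite mem_filter mem_enum andbT.
apply/asboolP; exists (d z w); split => //; split => //.
exact: (@Kr_mem _ (VR d (d z w)) z w (lexx _)).
Qed.

Lemma la (K : fieldType) (vT : vectType K) (K0 K1 L0 L1 : {vspace vT}) :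
  (K0 <= K1)%VS -> (L0 <= L1)%VS ->
  (\dim (K1 :&: L1) - \dim (K0 :&: L1 + K1 :&: L0))%N =
  (\dim ((K1 + L0) :&: (K0 + L1)) - \dim (K0 + L0))%N.
Proof.
move=> s01 t01.
have E1 : ((K1 + L0) :&: (K0 + L1) = (K0 + L0) + (K1 :&: L1))%VS.
  apply/eqP; rewrite eqEsubv; apply/andP; split.
    apply/subvP => x /memv_capP [/memv_addP [k1 hk1 [l0 hl0 ->]]].
    case/memv_addP => k0 hk0 [l1 hl1 E].
    have -> : k1 + l0 = (k0 + l0) + (k1 - k0).
      by rewrite addrAC subrKC.
    apply: memv_add; first exact: memv_add.
    apply/memv_capP; split; first exact: memvB hk1 (subvP s01 _ hk0).
    have -> : k1 - k0 = (k1 + l0) - (k0 + l0) by rewrite opprD addrACA subrr addr0.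
    rewrite E opprD addrACA subrr add0r.
    exact: memvB hl1 (subvP t01 _ hl0).
  rewrite subv_add !subv_cap addvS ?subvv // addvS ?subvv //=.
  by rewrite (subv_trans (capvSl _ _) (addvSl _ _)) (subv_trans (capvSr _ _) (addvSr _ _)).
have E2 : ((K0 + L0) :&: (K1 :&: L1) = (K0 :&: L1) + (K1 :&: L0))%VS.
  apply/eqP; rewrite eqEsubv; apply/andP; split.
    apply/subvP => x /memv_capP [/memv_addP [k0 hk0 [l0 hl0 ->]]].
    case/memv_capP => hx1 hx2.
    apply: memv_add; apply/memv_capP; split => //.
      have -> : k0 = (k0 + l0) - l0 by rewrite addrK.
      exact: memvB hx2 (subvP t01 _ hl0).
    have -> : l0 = (k0 + l0) - k0 by rewrite addrC addKr.
    exact: memvB hx1 (subvP s01 _ hk0).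
  rewrite subv_add !subv_cap (subv_trans (capvSl _ _) (addvSl _ _)) (subv_trans (capvSr _ _) (addvSr _ _)) /=.
  by rewrite (subv_trans (capvSl _ _) s01) capvSr capvSl (subv_trans (capvSr _ _) t01).
have := dimv_sum_cap (K0 + L0) (K1 :&: L1); rewrite -E1 E2.
lia.
Qed.



Lemma sum_pair (I : finType) (F : I * bool -> F2) :
  \sum_ed F ed = \sum_i (F (i,true) + F (i,false)).
Proof.
transitivity (\sum_(p : I * bool) F (p.1, p.2)); first by apply: eq_bigr => -[].
rewrite -(pair_big xpredT xpredT (fun i j => F (i, j))) /=.
by apply: eq_bigr => i _; rewrite big_bool.
Qed.

Lemma sum_pair_cond (I : finType) (P : pred (I * bool)) (F : I * bool -> F2) :
  \sum_(ed | P ed) F ed =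
  \sum_i ((if P (i,true) then F (i,true) else 0) + (if P (i,false) then F (i,false) else 0)).
Proof. by rewrite big_mkcond sum_pair. Qed.

Lemma eq_inl (A B : eqType) (x y : A) : (inl x == inl y :> A + B) = (x == y).
Proof. by apply/eqP/eqP => [[]|->]. Qed.
Lemma eq_inr (A B : eqType) (x y : B) : (inr x == inr y :> A + B) = (x == y).
Proof. by apply/eqP/eqP => [[]|->]. Qed.
Lemma eq_inlr (A B : eqType) (x : A) (y : B) : (inl x == inr y :> A + B) = false.
Proof. by []. Qed.
Lemma eq_inrl (A B : eqType) (x : A) (y : B) : (inr y == inl x :> A + B) = false.
Proof. by []. Qed.

Lemma sum_if1 (T : finType) (c : T) (F : T -> F2) :
  \sum_i (if i == c then F i else 0) = F c.
Proof. by rewrite -big_mkcond big_pred1_eq. Qed.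

Section G.
Variables (R : realType) (X Z : finType) (dX : X -> X -> R) (dZ : Z -> Z -> R)
  (f : X -> Z) (a b : R).
Local Notation gC := (grC dX dZ f a b).
Local Notation cC := (Defs.comp gC).
Local Notation GE := (GE dX dZ f a b).
Local Notation GV := (GV dX dZ f a b).
Local Notation iota := (@iota_ R X Z dX dZ f a b).
Local Notation mu := (@mu_ R X Z dX dZ f a b).
Local Notation Gbd := (@Gbd R X Z dX dZ f a b).

Lemma Gbd_C (g : chains GE) c : Gbd g (inl (inr c)) = g (c,true) + g (c,false).
Proof.
rewrite ffunE !sum_pair_cond /Gsrc /Gtgt /=.
rewrite [X in _ + X]big1 ?addr0; last first.
  by move=> i _; rewrite ?addr0.
rewrite -(sum_if1 c (fun i => g (i,true) + g (i,false))); apply: eq_bigr => i _.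
case: ifP => [/eqP [->]|ne]; first by rewrite eqxx.
by case: ifP => [/eqP ic|_]; [move: ne; rewrite ic eqxx | rewrite addr0].
Qed.

Lemma Gbd_A (g : chains GE) p :
  Gbd g (inl (inl p)) = \sum_(i | iota i == p) g (i,false).
Proof.
rewrite ffunE !sum_pair_cond /Gsrc /Gtgt /=.
rewrite big1 ?add0r; last first.
  by move=> i _; rewrite ?addr0.
rewrite [RHS]big_mkcond; apply: eq_bigr => i _.
rewrite ?add0r.
by case: ifP.
Qed.

Lemma Gbd_B (g : chains GE) q :
  Gbd g (inr q) = \sum_(i | mu i == q) g (i,true).
Proof.
rewrite ffunE !sum_pair_cond /Gsrc /Gtgt /=.
rewrite big1 ?add0r; last first.
  by move=> i _; rewrite ?addr0.
rewrite [RHS]big_mkcond; apply: eq_bigr => i _.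
rewrite ?addr0.
by case: ifP.
Qed.

End G.

Lemma ffun0E (T : finType) (x : T) : (0 : chains T) x = 0.
Proof. by rewrite ffunE. Qed.

Definition dup (I : finType) (u : chains I) : chains (I * bool)%type :=
  [ffun ed => u ed.1].
Lemma dup_linear (I : finType) : linear (@dup I).
Proof. by move=> k u v; apply/ffunP => ed; rewrite !ffunE. Qed.
HB.instance Definition _ (I : finType) :=
  GRing.isLinear.Build F2 (chains I) (chains (I * bool)%type) _ (@dup I) (@dup_linear I).

HB.instance Definition _ (R : realType) (X Z : finType) (dX : X -> X -> R) (dZ : Z -> Z -> R)
  (f : X -> Z) (a b : R) :=
  GRing.isLinear.Build F2 (chains (Defs.GE dX dZ f a b)) (chains (Defs.GV dX dZ f a b)) _
    (@Gbd R X Z dX dZ f a b) (@Gbd_linear R X Z dX dZ f a b).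

Lemma comp_of_sub (T : finType) (e e' : rel T) :
  (forall z w, e z w -> e' z w) ->
  forall x, comp_of e' (val (comp_of e x)) = comp_of e' x.
Proof.
move=> h x; apply: comp_of_eq => /=.
have : connect (usym e) (fingraph.root (usym e) x) x.
  by rewrite (sym_connect_sym (usym_sym e)); exact: connect_root.
apply: connect_sub => z w /orP [] /h hz; apply: connect1; by rewrite /usym hz ?orbT.
Qed.

Lemma H0_sec (T : finType) (e : rel T) (u : chains (Defs.comp e)) :
  H0map e (pushf val u) = u.
Proof.
rewrite H0mapE pushf_comp (@pushf_ext _ _ _ id); last by move=> c /=; rewrite comp_of_val.
by apply/ffunP => c; rewrite ffunE big_pred1_eq.
Qed.

Lemma H0_push (T : finType) (e e' : rel T) (v : chains T) :
  (forall z w, e z w -> e' z w) ->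
  pushf (fun c : Defs.comp e => comp_of e' (val c)) (H0map e v) = H0map e' v.
Proof.
move=> h; rewrite H0mapE pushf_comp H0mapE; apply: pushf_ext => x /=.
exact: comp_of_sub.
Qed.

Section G2.
Variables (R : realType) (X Z : finType) (dX : X -> X -> R) (dZ : Z -> Z -> R)
  (f : X -> Z) (a b : R).
Local Notation gA := (grA dX dZ f a b).
Local Notation gB := (grB dX dZ f a b).
Local Notation gC := (grC dX dZ f a b).
Local Notation cC := (Defs.comp gC).
Local Notation GE := (GE dX dZ f a b).
Local Notation iota := (@iota_ R X Z dX dZ f a b).
Local Notation mu := (@mu_ R X Z dX dZ f a b).
Local Notation Gbd := (@Gbd R X Z dX dZ f a b).

Lemma fVR_mono z w : fVR dX f true a z w -> fVR dX f false a z w.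
Proof.
move=> /existsP [x /existsP [y /and3P [h1 h2 h3]]].
by apply/existsP; exists x; apply/existsP; exists y; rewrite h1 h2 /= ltW.
Qed.

Lemma subCA z w : gC z w -> gA z w.
Proof. by rewrite /grA /grC; case/orP => [/fVR_mono ->| ->]; rewrite ?orbT. Qed.

Lemma subCB z w : gC z w -> gB z w.
Proof. by rewrite /grB /grC /VRs /=; case/orP => [->|/ltW ->]; rewrite ?orbT. Qed.

Definition NN : {vspace chains cC} :=
  (lker (linfun (pushf iota)) :&: lker (linfun (pushf mu)))%VS.

Lemma iota_push v : pushf iota (H0map gC v) = H0map gA v.
Proof. exact: (H0_push v subCA). Qed.
Lemma mu_push v : pushf mu (H0map gC v) = H0map gB v.
Proof. exact: (H0_push v subCB). Qed.

Lemma N_img : NN = (linfun (H0map gC) @: (Kr gA :&: Kr gB))%VS.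
Proof.
apply/eqP; rewrite eqEsubv; apply/andP; split.
  apply/subvP => u /memv_capP []; rewrite !memv_ker !lfunE /= => /eqP h1 /eqP h2.
  have -> : u = linfun (H0map gC) (pushf val u) by rewrite lfunE /= H0_sec.
  apply: memv_img; apply/memv_capP; split; rewrite memv_ker lfunE /=; apply/eqP.
    by rewrite -iota_push H0_sec.
  by rewrite -mu_push H0_sec.
apply/subvP => u /memv_imgP [v /memv_capP [] + + ->].
rewrite !memv_ker !lfunE /= => /eqP h1 /eqP h2.
by apply/memv_capP; split; rewrite memv_ker lfunE /= ?iota_push ?mu_push ?h1 ?h2.
Qed.

Lemma dimN : \dim NN = (\dim (Kr gA :&: Kr gB) - \dim (Kr gC))%N.
Proof.
have := limg_ker_dim (linfun (H0map gC)) (Kr gA :&: Kr gB).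
have -> : ((Kr gA :&: Kr gB) :&: lker (linfun (H0map gC)) = Kr gC)%VS.
  apply/capv_idPr; rewrite subv_cap; apply/andP; split; apply: Kr_mono; [exact: subCA | exact: subCB].
rewrite -N_img => <-.
by rewrite addKn.
Qed.

Lemma H1_img : H1G dX dZ f a b = (linfun (@dup cC) @: NN)%VS.
Proof.
apply/eqP; rewrite eqEsubv; apply/andP; split.
  apply/subvP => g; rewrite memv_ker lfunE /= => /eqP hg.
  have gt c : g (c,true) = g (c,false).
    have := congr1 (fun h : chains (Defs.GV dX dZ f a b) => h (inl (inr c))) hg; rewrite /= Gbd_C ffun0E.
    exact: F2_eq.
  have -> : g = linfun (@dup cC) [ffun c => g (c,false)].
    by rewrite lfunE /=; apply/ffunP => -[c []]; rewrite !ffunE.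
  apply: memv_img; apply/memv_capP; split; rewrite memv_ker lfunE /=;
    apply/eqP/ffunP => p; rewrite ffun0E ffunE; under eq_bigr do rewrite ffunE.
    by rewrite -Gbd_A hg ffun0E.
  by under eq_bigr do rewrite -gt; rewrite -Gbd_B hg ffun0E.
apply/subvP => g /memv_imgP [u /memv_capP [hu1 hu2] ->].
rewrite memv_ker !lfunE /=; apply/eqP/ffunP => -[[p|c]|q]; rewrite ffun0E.
- rewrite Gbd_A; under eq_bigr do rewrite ffunE.
  move: hu1; rewrite memv_ker lfunE /= => /eqP/(congr1 (fun h : chains (Defs.comp gA) => h p)).
  by rewrite ffunE ffun0E.
- by rewrite Gbd_C !ffunE F2_2.
- rewrite Gbd_B; under eq_bigr do rewrite ffunE.
  move: hu2; rewrite memv_ker lfunE /= => /eqP/(congr1 (fun h : chains (Defs.comp gB) => h q)).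
  by rewrite ffunE ffun0E.
Qed.

Lemma dimH1 : \dim (H1G dX dZ f a b) = \dim NN.
Proof.
rewrite H1_img limg_dim_eq //.
have /eqP -> : lker (linfun (@dup cC)) == 0%VS.
  apply/lker0P => u v; rewrite !lfunE /= => h; apply/ffunP => c.
  by have := congr1 (fun g : chains (cC * bool)%type => g (c,false)) h; rewrite !ffunE.
exact: capv0.
Qed.

End G2.



Theorem proposition3p1 (R : realType) (X Z : finType)
  (dX : X -> X -> R) (dZ : Z -> Z -> R) (f : X -> Z) (a b : R) :
  is_metric dX -> is_metric dZ ->
  barcode dX a -> barcode dZ b ->
  Mf dX dZ f a b = \dim (H1G dX dZ f a b).
Proof.
move=> [dX0 _ _ _] [dZ0 _ _ _] _ _.
have i1 : (f0 f @: kerP dX a)%VS = Kr (fVR dX f false a) := Kr_img f (VRs dX false a).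
have i0 : (f0 f @: kerM dX a)%VS = Kr (fVR dX f true a).
  by rewrite kerM_eq //; exact: Kr_img.
have l1 : kerP dZ b = Kr (VRs dZ false b) := kerP_eq dZ b.
have l0 : kerM dZ b = Kr (VRs dZ true b) := kerM_eq b dZ0.
have eA : Kr (grA dX dZ f a b) = (Kr (fVR dX f false a) + Kr (VRs dZ true b))%VS :=
  Kr_union _ _.
have eB : Kr (grB dX dZ f a b) = (Kr (fVR dX f true a) + Kr (VRs dZ false b))%VS :=
  Kr_union _ _.
have eC : Kr (grC dX dZ f a b) = (Kr (fVR dX f true a) + Kr (VRs dZ true b))%VS :=
  Kr_union _ _.
rewrite /Mf /qdim i1 i0 l1 l0 dimH1 dimN eA eB eC.
apply: la; apply: Kr_mono => z w.
  exact: fVR_mono.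
by rewrite /VRs /=; apply: ltW.
Qed.
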